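(* Let $R>1$ and, in the upper half-plane model, let $\ell$ have endpoints $\pm R^{-1}$ (transversely oriented towards $0$) and $\ell'$ have endpoints $\pm R$ (transversely oriented towards $\infty$). For $\epsilon\in\{1,-1\}$ and $t\in\mathbb{R}$ let $$P_\epsilon(t)=\begin{bmatrix}1-t & -\epsilon R^{-1}t\\ \epsilon Rt & 1+t\end{bmatrix},\qquad P'_\epsilon(t)=\begin{bmatrix}1+t & -\epsilon Rt\\ \epsilon R^{-1}t & 1-t\end{bmatrix}\in G_0.$$ Let $h\in G_0$ be represented by $\begin{pmatrix}a&b\\c&d\end{pmatrix}$ with $ad-bc=1$, and suppose $|aR+\varepsilon' b+\varepsilon c+\varepsilon\varepsilon' dR^{-1}|<|R+\varepsilon\varepsilon' R^{-1}|$ for all $\varepsilon,\varepsilon'\in\{1,-1\}$, and that $h$ is not represented by a diagonal matrix. Then at least one of the following holds: one of the curves $(hP'_+(t))_{t>0}$, $(hP'_-(t))_{t>0}$ intersects $\mathsf{SQ}(\ell)$ transversely, or one of the curves $(P_+(t)^{-1}h)_{t>0}$, $(P_-(t)^{-1}h)_{t>0}$ intersects $\mathsf{SQ}(\ell')^{-1}$ transversely.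
   Context: $G_0=\mathrm{PSL}_2(\mathbb{R})$ (a $3$-manifold, identified with $\mathrm{AdS}^3$) acts on the upper half-plane by Möbius transformations; $[\cdot]$ denotes the class of a matrix. For a transversely oriented geodesic line $\ell$, the stem quadrant $\mathsf{SQ}(\ell)\subset G_0$ is the set of hyperbolic elements whose translation axis is orthogonal to $\ell$ and which translate towards the positive side of $\ell$; it is a $2$-dimensional surface in $G_0$. $\mathsf{SQ}(\ell')^{-1}=\{h^{-1}:h\in\mathsf{SQ}(\ell')\}$. Transverse intersection is meant in the sense of a curve meeting a surface transversely in $G_0$. *)

(* Defs.v *)
From Stdlib Require Import Reals.
Open Scope R_scope.

(** G_0 = PSL_2(R) is represented through SL_2(R):
    a subset of G_0 is represented by its (sign-invariant) preimage in SL_2(R),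
    and curves in G_0 by (continuous) lifts to SL_2(R) ⊂ R^4. *)
Record M2 := mkM2 { m11 : R; m12 : R; m21 : R; m22 : R }.

Definition mdet (M : M2) : R := m11 M * m22 M - m12 M * m21 M.
Definition mtr (M : M2) : R := m11 M + m22 M.

Definition mmul (M N : M2) : M2 :=
  mkM2 (m11 M * m11 N + m12 M * m21 N) (m11 M * m12 N + m12 M * m22 N)
       (m21 M * m11 N + m22 M * m21 N) (m21 M * m12 N + m22 M * m22 N).

Definition minv (M : M2) : M2 :=
  mkM2 (m22 M / mdet M) (- m12 M / mdet M) (- m21 M / mdet M) (m11 M / mdet M).

Definition inH (p : R * R) : Prop := 0 < snd p.

(** Möbius action z |-> (a z + b)/(c z + d), in real coordinates z = x + i y. *)
Definition mobius (M : M2) (p : R * R) : R * R :=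
  let x := fst p in let y := snd p in
  let D := (m21 M * x + m22 M) ^ 2 + (m21 M * y) ^ 2 in
  (((m11 M * x + m12 M) * (m21 M * x + m22 M) + m11 M * m21 M * y ^ 2) / D,
   mdet M * y / D).

(** Geodesic lines of the upper half-plane: semicircles centred on the real
    axis (centre m, radius r > 0) and vertical half-lines (at abscissa m). *)
Inductive geod : Type :=
| Semi (m r : R)
| Vert (m : R).

Definition on_geod (g : geod) (p : R * R) : Prop :=
  inH p /\
  match g with
  | Semi m r => (fst p - m) ^ 2 + snd p ^ 2 = r ^ 2
  | Vert m => fst p = m
  end.

(** A (Euclidean, hence hyperbolic, the model being conformal) tangent
    direction of the geodesic g at a point p of g. *)
Definition tangent_dir (g : geod) (p : R * R) : R * R :=
  match g with
  | Semi m r => (snd p, - (fst p - m))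
  | Vert m => (0, 1)
  end.

Definition orth_at (g g' : geod) (p : R * R) : Prop :=
  on_geod g p /\ on_geod g' p /\
  fst (tangent_dir g p) * fst (tangent_dir g' p)
  + snd (tangent_dir g p) * snd (tangent_dir g' p) = 0.

(** Boundary points ∂H = R ∪ {∞}: [Some x] is x, [None] is ∞. *)
Definition fixes_bd (M : M2) (q : option R) : Prop :=
  match q with
  | Some x => m21 M * x + m22 M <> 0 /\
              m11 M * x + m12 M = x * (m21 M * x + m22 M)
  | None => m21 M = 0
  end.

Definition endpoints (g : geod) : option R * option R :=
  match g with
  | Semi m r => (Some (m - r), Some (m + r))
  | Vert m => (Some m, None)
  end.

Definition hyperbolic (M : M2) : Prop := 2 < Rabs (mtr M).

Definition is_axis (M : M2) (g : geod) : Prop :=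
  hyperbolic M /\
  (match g with Semi _ r => 0 < r | Vert _ => True end) /\
  fixes_bd M (fst (endpoints g)) /\ fixes_bd M (snd (endpoints g)).

(** Stem quadrant of the transversely oriented geodesic (l, pos), where pos
    is the positive side (open half-plane bounded by l); given as the
    preimage in SL_2(R). *)
Definition SQ (l : geod) (pos : R * R -> Prop) (M : M2) : Prop :=
  mdet M = 1 /\ hyperbolic M /\
  exists g p, is_axis M g /\ orth_at g l p /\ pos (mobius M p).

Definition SQinv (l : geod) (pos : R * R -> Prop) (M : M2) : Prop :=
  exists N, SQ l pos N /\ M = minv N.

Definition has_deriv (gam : R -> M2) (t : R) (v : M2) : Prop :=
  derivable_pt_lim (fun s => m11 (gam s)) t (m11 v) /\
  derivable_pt_lim (fun s => m12 (gam s)) t (m12 v) /\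
  derivable_pt_lim (fun s => m21 (gam s)) t (m21 v) /\
  derivable_pt_lim (fun s => m22 (gam s)) t (m22 v).

Definition tangent_vec (S : M2 -> Prop) (p v : M2) : Prop :=
  exists (sig : R -> M2) (delta : R), 0 < delta /\ sig 0 = p /\
    (forall s, Rabs s < delta -> S (sig s)) /\ has_deriv sig 0 v.

Definition meets_transversely (gam : R -> M2) (S : M2 -> Prop) : Prop :=
  exists t0 v, 0 < t0 /\ S (gam t0) /\ has_deriv gam t0 v /\
    ~ tangent_vec S (gam t0) v.

Definition ell (Rr : R) : geod := Semi 0 (/ Rr).
Definition ell_pos (Rr : R) (p : R * R) : Prop :=
  fst p ^ 2 + snd p ^ 2 < (/ Rr) ^ 2.          (* towards 0 *)
Definition ell' (Rr : R) : geod := Semi 0 Rr.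
Definition ell'_pos (Rr : R) (p : R * R) : Prop :=
  Rr ^ 2 < fst p ^ 2 + snd p ^ 2.              (* towards ∞ *)

Definition Pm (Rr e t : R) : M2 :=
  mkM2 (1 - t) (- e * / Rr * t) (e * Rr * t) (1 + t).
Definition Pm' (Rr e t : R) : M2 :=
  mkM2 (1 + t) (- e * Rr * t) (e * / Rr * t) (1 - t).

(* Main.v *)
Require Import Defs.
From Stdlib Require Import Reals Lra Psatz FunctionalExtensionality.
Open Scope R_scope.

Lemma key (p q T u v : R) : 0 < q -> q < p ->
  Rabs (p*T - q*u) < 2*p -> Rabs (q*T - p*v) < 2*q -> u*v = T^2 - 4 ->
  2 < Rabs T /\ 0 < T*(u+v).
Proof.
  intros Hq Hqp H1 H2 Huv.
  apply Rabs_def2 in H1. apply Rabs_def2 in H2. destruct H1 as [H1 H1']. destruct H2 as [H2 H2'].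
  assert (HT : 2 < Rabs T).
  { destruct (Rlt_or_le 2 (Rabs T)) as [h|h]; auto.
    exfalso. assert (h0 := Rle_abs T). assert (h1 := Rle_abs (-T)). rewrite Rabs_Ropp in h1.
    destruct (Rle_or_lt 0 u); destruct (Rle_or_lt 0 v).
    - assert (0 <= (2-T)*(2+T)) by nra.
      assert (T <> -2) by (intro; subst; nra).
      assert (T <> 2). { intro; subst. assert (0 < u) by nra. assert (0 < v) by nra. nra. }
      assert (0 < (2-T)*(2+T)) by (apply Rmult_lt_0_compat; lra). nra.
    - assert (0 < p*(T+2) - q*u) by lra. assert (0 < q*(2-T) + p*v) by lra.
      assert (0 <= (p*(T+2) - q*u) * (-v)) by nra.
      assert (0 <= u * (q*(2-T) + p*v)) by nra. nra.
    - assert (0 < q*(T+2) - p*v) by lra. assert (0 < p*(2-T) + q*u) by lra.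
      assert (0 <= (q*(T+2) - p*v) * (-u)) by nra.
      assert (0 <= v * (p*(2-T) + q*u)) by nra. nra.
    - nra. }
  split; auto.
  destruct (Rle_or_lt 0 T) as [hT|hT].
  - rewrite Rabs_right in HT by lra.
    assert (0 < u) by nra. assert (0 < v) by nra. nra.
  - rewrite Rabs_left in HT by lra.
    assert (u < 0) by nra. assert (v < 0) by nra. nra.
Qed.

Lemma deriv_lin (f : R -> R) (al be x : R) :
  (forall t, f t = al + be * t) -> derivable_pt_lim f x be.
Proof.
  intros Hf eps He. exists (mkposreal 1 Rlt_0_1). intros h Hh _.
  rewrite !Hf. replace ((al + be * (x + h) - (al + be * x)) / h - be) with 0 by (field; auto).
  rewrite Rabs_R0; auto.
Qed.

Lemma deriv_loc0 (f : R -> R) (del : R) : 0 < del ->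
  (forall s, Rabs s < del -> f s = 0) -> derivable_pt_lim f 0 0.
Proof.
  intros Hd Hf eps He. exists (mkposreal del Hd). intros h Hh Hhd. simpl in Hhd.
  rewrite Hf by (rewrite Rplus_0_l; auto). rewrite Hf by (rewrite Rabs_R0; auto).
  replace ((0 - 0) / h - 0) with 0 by (field; auto). rewrite Rabs_R0; auto.
Qed.

Lemma not_tangent (S : M2 -> Prop) (k : R) (M v : M2) :
  (forall N, S N -> m12 N + k * m21 N = 0) -> m12 v + k * m21 v <> 0 ->
  ~ tangent_vec S M v.
Proof.
  intros HS Hv [sig [del [Hd [H0 [Hin [_ [H12 [H21 _]]]]]]]].
  apply Hv.
  assert (D1 : derivable_pt_lim (fun s => m12 (sig s) + k * m21 (sig s)) 0 (m12 v + k * m21 v)).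
  { apply (derivable_pt_lim_plus (fun s => m12 (sig s)) (fun s => k * m21 (sig s))); auto.
    apply (derivable_pt_lim_scal (fun s => m21 (sig s))); auto. }
  assert (D2 : derivable_pt_lim (fun s => m12 (sig s) + k * m21 (sig s)) 0 0).
  { apply (deriv_loc0 _ del Hd). intros s Hs. apply HS, Hin, Hs. }
  exact (uniqueness_limite _ _ _ _ D1 D2).
Qed.

Lemma SQ_F (rho : R) pos (N : M2) : SQ (Semi 0 rho) pos N -> m12 N + rho^2 * m21 N = 0.
Proof.
  intros [_ [_ [g [[x y] [[_ [Hr [Hf1 Hf2]]] [[Hg [Hl Ht]] _]]]]]].
  destruct N as [A B C D]; simpl in *.
  destruct g as [m r|m]; simpl in *.
  - destruct Hf1 as [_ E1]. destruct Hf2 as [_ E2].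
    destruct Hg as [_ Hg]. destruct Hl as [_ Hl]. simpl in Hg, Hl.
    assert (Hmx : rho^2 = m * x) by nra.
    assert (Hr2 : r^2 = m^2 - rho^2) by nra.
    assert (E3 : 2*m*C + D - A = 0).
    { assert (((m+r) - (m-r)) * (C*((m-r)+(m+r)) + D - A) = 0) by nra.
      apply Rmult_integral in H. destruct H; nra. }
    assert (E4 : C*(m-r)^2 + (D-A)*(m-r) - B = 0) by nra.
    replace (D - A) with (-(2*m*C)) in E4 by lra.
    assert (C*(r^2 - m^2 + rho^2) = 0) by (rewrite Hr2; ring). nra.
  - destruct Hf1 as [_ E1]. destruct Hl as [_ Hl]. destruct Hg as [_ Hg].
    simpl in Hg, Ht. assert (m = 0) by lra. subst. nra.
Qed.

Lemma pow2_gt_0 (x : R) : x <> 0 -> 0 < x^2.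
Proof. intros. rewrite <- Rsqr_pow2. apply Rsqr_pos_lt; auto. Qed.

Lemma mob_norm (A B C D x y : R) : A*D - B*C = 1 -> 0 < (C*x+D)^2 + (C*y)^2 ->
  fst (mobius (mkM2 A B C D) (x,y))^2 + snd (mobius (mkM2 A B C D) (x,y))^2
  = ((A*x+B)^2 + (A*y)^2) / ((C*x+D)^2 + (C*y)^2).
Proof.
  intros Hd Hpos. unfold mobius, mdet; simpl. rewrite Hd.
  field_simplify_eq; [| lra].
  match goal with |- ?L = ?R => assert (E : L - R = (1 - (A*D-B*C)^2)*y^2) by ring end.
  rewrite Hd in E. lra.
Qed.

Lemma memSQ (rho A B C D : R) : 0 < rho -> A*D - B*C = 1 -> B + rho^2*C = 0 ->
  2 < Rabs (A+D) -> (A+D)*(D-A) <> 0 ->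
  exists g p, is_axis (mkM2 A B C D) g /\ orth_at g (Semi 0 rho) p /\
   (fst (mobius (mkM2 A B C D) p)^2 + snd (mobius (mkM2 A B C D) p)^2 - rho^2)
     * ((A+D)*(D-A)) < 0.
Proof.
  intros Hrho Hdet HB HT Hw.
  assert (HT2 : 4 < (A+D)^2).
  { destruct (Rle_or_lt 0 (A+D)); [rewrite Rabs_right in HT by lra | rewrite Rabs_left in HT by lra]; nra. }
  destruct (Req_dec C 0) as [HC|HC].
  - subst C. assert (HB0 : B = 0) by lra. subst B.
    exists (Vert 0), (0, rho). split; [|split].
    + unfold is_axis, hyperbolic, mtr; simpl. repeat split; auto.
      * intro. nra.
      * ring.
    + unfold orth_at, on_geod, inH; simpl. repeat split; try lra; ring.
    + rewrite mob_norm; auto.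
      2: { assert (D <> 0) by (intro; subst; lra). nra. }
      assert (HD : D <> 0) by (intro; subst; lra).
      replace (((A * 0 + 0) ^ 2 + (A * rho) ^ 2) / ((0 * 0 + D) ^ 2 + (0 * rho) ^ 2))
        with (A^4 * rho^2).
      2:{ assert (HAD : A*D = 1) by lra. field_simplify_eq; auto.
          replace (A^4*rho^2*D^2) with ((A*D)^2*(A^2*rho^2)) by ring. rewrite HAD. ring. }
      assert (HA4 : A^4 <> 1).
      { intro h. apply Hw. assert (A^2 * D^2 = 1) by (replace (A^2*D^2) with ((A*D)^2) by ring; replace (A*D) with 1 by lra; ring).
        assert (A^2 = 1) by nra. nra. }
      assert (0 < A^2*D^2) by nra.
      assert (E : (A^4*rho^2 - rho^2) * ((A+D)*(D-A)) * (A^2) = - rho^2 * (A^4 - 1)^2).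
      { assert (HAD : A*D = 1) by lra.
        replace ((A^4*rho^2 - rho^2) * ((A+D)*(D-A)) * A^2) with ((A^4*rho^2 - rho^2)*((A*D)^2 - A^4)) by ring. rewrite HAD. ring. }
      assert (0 < (A^4-1)^2) by (apply pow2_gt_0; lra).
      assert (0 < A^2) by (apply pow2_gt_0; intro; subst; lra).
      assert (0 < rho^2 * (A^4-1)^2) by (apply Rmult_lt_0_compat; nra).
      match goal with |- ?X < 0 => destruct (Rlt_or_le X 0) as [hx|hx]; auto end.
      assert (0 <= (A ^ 4 * rho ^ 2 - rho ^ 2) * ((A + D) * (D - A)) * A^2) by (apply Rmult_le_pos; lra).
      lra.
  - set (T := A + D) in *. set (w := D - A) in *.
    assert (Hw0 : w <> 0) by (intro h; apply Hw; rewrite h; ring).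
    assert (HDel : T^2 - 4 = w^2 + 4*B*C) by (unfold T, w; nra).
    assert (HC2 : 0 < C^2) by (apply pow2_gt_0; auto).
    set (r := sqrt ((T^2-4)/(4*C^2))).
    assert (Hr0 : 0 < r) by (apply sqrt_lt_R0; apply Rdiv_lt_0_compat; lra).
    assert (Hr2 : 4*C^2*r^2 = T^2 - 4).
    { unfold r. rewrite pow2_sqrt by (apply Rlt_le, Rdiv_lt_0_compat; lra). field; lra. }
    set (m := - w / (2*C)).
    assert (Hm : 2*C*m = - w) by (unfold m; field; auto).
    assert (Hmr : m^2 = r^2 + rho^2).
    { assert (4*C^2*(m^2 - r^2 - rho^2) = 0).
      { replace (4*C^2*(m^2 - r^2 - rho^2)) with ((2*C*m)^2 - 4*C^2*r^2 - 4*C*(rho^2*C)) by ring.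
        rewrite Hm, Hr2. replace (rho^2*C) with (-B) by lra. nra. }
      apply Rmult_integral in H. destruct H; nra. }
    assert (Hm0 : m <> 0) by (intro h; rewrite h in Hmr; nra).
    set (x := rho^2 / m).
    assert (Hx : x * m = rho^2) by (unfold x; field; auto).
    assert (Hx2 : x^2 < rho^2).
    { assert (x^2 * m^2 = rho^2 * rho^2) by (rewrite <- Hx; ring).
      assert (rho^2 < m^2) by nra. assert (0 < rho^2) by nra. nra. }
    set (y := sqrt (rho^2 - x^2)).
    assert (Hy0 : 0 < y) by (apply sqrt_lt_R0; lra).
    assert (Hy2 : y^2 = rho^2 - x^2) by (unfold y; rewrite pow2_sqrt; lra).
    assert (Hfix : forall z, (z - m)^2 = r^2 ->
               C*z + D <> 0 /\ A*z + B = z*(C*z+D)).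
    { intros z Hz. split.
      - intro h. assert (C*z - C*m = -T/2) by (unfold T; unfold w in Hm; lra).
        assert ((C*z - C*m)^2 = C^2*r^2) by (replace ((C*z - C*m)^2) with (C^2*(z-m)^2) by ring; rewrite Hz; ring).
        nra.
      - assert (4*C*(C*z^2 + w*z - B) = 0).
        { replace (4*C*(C*z^2 + w*z - B)) with ((2*C*z + w)^2 - w^2 - 4*B*C) by ring.
          replace (2*C*z + w) with (2*C*(z - m)) by lra.
          replace ((2*C*(z-m))^2) with (4*C^2*(z-m)^2) by ring. rewrite Hz. lra. }
        apply Rmult_integral in H. destruct H as [H|H]; [lra|].
        apply Rminus_diag_uniq. replace (A*z+B - z*(C*z+D)) with (-(C*z^2 + w*z - B)) by (unfold w; ring).
        rewrite H; ring. }
    exists (Semi m r), (x, y). split; [|split].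
    + unfold is_axis, hyperbolic, mtr; simpl. split; [exact HT|]. split; [exact Hr0|].
      split; apply Hfix; ring.
    + unfold orth_at, on_geod, inH; simpl. repeat split; auto.
      * nra.
      * nra.
      * nra.
    + rewrite mob_norm; auto.
      2: { assert (0 < (C*y)^2) by (apply pow2_gt_0; apply Rmult_integral_contrapositive; split; lra).
           assert (0 <= (C*x+D)^2) by apply pow2_ge_0. lra. }
      set (N1 := (A*x+B)^2 + (A*y)^2). set (Den := (C*x+D)^2 + (C*y)^2).
      assert (HDen : 0 < Den).
      { assert (0 < (C*y)^2) by (apply pow2_gt_0; apply Rmult_integral_contrapositive; split; lra).
        assert (0 <= (C*x+D)^2) by apply pow2_ge_0. unfold Den; lra. }
      assert (E1 : N1 - rho^2*Den = - rho^2 * T * (w + 2*C*x)).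
      { unfold N1, Den. replace ((A*y)^2) with (A^2*y^2) by ring. replace ((C*y)^2) with (C^2*y^2) by ring.
        rewrite Hy2. replace B with (-(rho^2*C)) by lra. unfold T, w. ring. }
      assert (Hxw : x * w = -2*C*rho^2) by (replace (x*w) with (-2*C*(x*m)) by (replace w with (-(2*C*m)) by lra; ring); rewrite Hx; ring).
      assert (E2 : (N1 - rho^2*Den) * w = - rho^2 * T * (T^2 - 4)).
      { rewrite E1. replace (- rho ^ 2 * T * (w + 2 * C * x) * w) with (- rho ^ 2 * T * (w^2 + 2*C*(x*w))) by ring.
        rewrite Hxw, HDel. replace B with (-(rho^2*C)) by lra. ring. }
      replace ((N1 / Den - rho^2) * (T*w)) with (((N1 - rho^2*Den) * w) * T / Den) by (field; lra).
      rewrite E2.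
      assert (0 < rho^2 * T^2 * (T^2 - 4)).
      { apply Rmult_lt_0_compat; [|lra]. apply Rmult_lt_0_compat; apply pow2_gt_0; try lra.
        intro h; rewrite h in HT2; lra. }
      replace (- rho ^ 2 * T * (T ^ 2 - 4) * T / Den) with (-(rho ^ 2 * T^2 * (T ^ 2 - 4) / Den)) by (field; lra).
      assert (0 < rho ^ 2 * T^2 * (T ^ 2 - 4) / Den) by (apply Rdiv_lt_0_compat; auto).
      lra.
Qed.

Lemma alg_in (R A B C D e : R) : 1 < R -> (e = 1 \/ e = -1) -> A*D - B*C = 1 ->
  B + (/R)^2*C = 0 ->
  Rabs (A*R + e*B + e*C + e*e*D*/R) < Rabs (R + e*e*/R) ->
  Rabs (A*R + e*B + (-e)*C + (-e)*e*D*/R) < Rabs (R + (-e)*e*/R) ->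
  2 < Rabs (A+D) /\ 0 < (A+D)*(D-A).
Proof.
  intros HR He Hdet HB H1 H2.
  assert (HR0 : R <> 0) by lra.
  assert (Hee : e*e = 1) by (destruct He; subst; ring).
  assert (Hp : Rabs (R + e*e*/R) = R + /R).
  { rewrite Hee, Rmult_1_l. apply Rabs_right. assert (0 < /R) by (apply Rinv_0_lt_compat; lra). lra. }
  assert (Hq : Rabs (R + (-e)*e*/R) = R - /R).
  { replace (R + (-e)*e*/R) with (R - (e*e)*/R) by ring. rewrite Hee, Rmult_1_l. apply Rabs_right.
    assert (/R < 1) by (rewrite <- Rinv_1; apply Rinv_lt_contravar; lra). lra. }
  rewrite Hp in H1. rewrite Hq in H2.
  destruct (key (R^2+1) (R^2-1) (A+D) (D - A - 2*e*C/R) (D - A + 2*e*C/R)) as [K1 K2].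
  - nra.
  - lra.
  - replace ((R^2+1)*(A+D) - (R^2-1)*(D - A - 2*e*C/R)) with (2*R*(A*R + e*B + e*C + e*e*D*/R)).
    2:{ replace B with (-((/R)^2*C)) by lra. rewrite Hee. field. auto. }
    rewrite Rabs_mult, (Rabs_right (2*R)) by lra.
    replace (2*(R^2+1)) with (2*R*(R + /R)) by (field; auto).
    apply Rmult_lt_compat_l; lra.
  - replace ((R^2-1)*(A+D) - (R^2+1)*(D - A + 2*e*C/R)) with (2*R*(A*R + e*B + (-e)*C + (-e)*e*D*/R)).
    2:{ replace B with (-((/R)^2*C)) by lra. replace ((-e)*e) with (-(e*e)) by ring. rewrite Hee. field. auto. }
    rewrite Rabs_mult, (Rabs_right (2*R)) by lra.
    replace (2*(R^2-1)) with (2*R*(R - /R)) by (field; auto).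
    apply Rmult_lt_compat_l; lra.
  - replace ((D - A - 2*e*C/R)*(D - A + 2*e*C/R)) with ((D-A)^2 - 4*(e*e)*(C^2*(/R)^2)) by (field; auto).
    rewrite Hee. replace (C^2*(/R)^2) with (- (B*C)) by (replace B with (-((/R)^2*C)) by lra; ring).
    nra.
  - split; auto. nra.
Qed.

Lemma alg_out (R A B C D e : R) : 1 < R -> (e = 1 \/ e = -1) -> A*D - B*C = 1 ->
  B + R^2*C = 0 ->
  Rabs (A*R + e*B + e*C + e*e*D*/R) < Rabs (R + e*e*/R) ->
  Rabs (A*R + (-e)*B + e*C + e*(-e)*D*/R) < Rabs (R + e*(-e)*/R) ->
  2 < Rabs (A+D) /\ 0 < (A+D)*(D-A).
Proof.
  intros HR He Hdet HB H1 H2.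
  assert (HR0 : R <> 0) by lra.
  assert (Hee : e*e = 1) by (destruct He; subst; ring).
  assert (Hp : Rabs (R + e*e*/R) = R + /R).
  { rewrite Hee, Rmult_1_l. apply Rabs_right. assert (0 < /R) by (apply Rinv_0_lt_compat; lra). lra. }
  assert (Hq : Rabs (R + e*(-e)*/R) = R - /R).
  { replace (R + e*(-e)*/R) with (R - (e*e)*/R) by ring. rewrite Hee, Rmult_1_l. apply Rabs_right.
    assert (/R < 1) by (rewrite <- Rinv_1; apply Rinv_lt_contravar; lra). lra. }
  rewrite Hp in H1. rewrite Hq in H2.
  destruct (key (R^2+1) (R^2-1) (A+D) (D - A + 2*e*R*C) (D - A - 2*e*R*C)) as [K1 K2].
  - nra.
  - lra.
  - replace ((R^2+1)*(A+D) - (R^2-1)*(D - A + 2*e*R*C)) with (2*R*(A*R + e*B + e*C + e*e*D*/R)).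
    2:{ replace B with (-(R^2*C)) by lra. rewrite Hee. field. auto. }
    rewrite Rabs_mult, (Rabs_right (2*R)) by lra.
    replace (2*(R^2+1)) with (2*R*(R + /R)) by (field; auto).
    apply Rmult_lt_compat_l; lra.
  - replace ((R^2-1)*(A+D) - (R^2+1)*(D - A - 2*e*R*C)) with (2*R*(A*R + (-e)*B + e*C + e*(-e)*D*/R)).
    2:{ replace B with (-(R^2*C)) by lra. destruct He as [He|He]; subst e; field; auto. }
    rewrite Rabs_mult, (Rabs_right (2*R)) by lra.
    replace (2*(R^2-1)) with (2*R*(R - /R)) by (field; auto).
    apply Rmult_lt_compat_l; lra.
  - replace ((D - A + 2*e*R*C)*(D - A - 2*e*R*C)) with ((D-A)^2 - 4*(e*e)*(R^2*C^2)) by ring.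
    rewrite Hee. replace (R^2*C^2) with (- (B*C)) by (replace B with (-(R^2*C)) by lra; ring).
    nra.
  - split; auto. nra.
Qed.

Lemma memSQ_in (rho A B C D : R) : 0 < rho -> A*D - B*C = 1 -> B + rho^2*C = 0 ->
  2 < Rabs (A+D) -> 0 < (A+D)*(D-A) ->
  SQ (Semi 0 rho) (fun p => fst p ^ 2 + snd p ^ 2 < rho ^ 2) (mkM2 A B C D).
Proof.
  intros. destruct (memSQ rho A B C D) as [g [p [H4 [H5 H6]]]]; auto; try lra.
  split; [unfold mdet; simpl; auto|]. split; [unfold hyperbolic, mtr; simpl; auto|].
  exists g, p. split; [exact H4|split; [exact H5|]]. simpl.
  destruct (Rlt_or_le (fst (mobius (mkM2 A B C D) p) ^ 2 + snd (mobius (mkM2 A B C D) p) ^ 2) (rho^2)) as [h|h]; auto.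
  assert (0 <= (fst (mobius (mkM2 A B C D) p) ^ 2 + snd (mobius (mkM2 A B C D) p) ^ 2 - rho^2) * ((A+D)*(D-A)))
    by (apply Rmult_le_pos; lra). lra.
Qed.

Lemma memSQinv (R A B C D : R) : 1 < R -> A*D - B*C = 1 -> B + R^2*C = 0 ->
  2 < Rabs (A+D) -> 0 < (A+D)*(D-A) ->
  SQinv (ell' R) (ell'_pos R) (mkM2 A B C D).
Proof.
  intros. exists (mkM2 D (-B) (-C) A). split.
  - assert (2 < Rabs (D+A)) by (rewrite Rplus_comm; auto).
    assert ((D+A)*(A-D) <> 0) by (intro h; assert ((D+A)*(A-D) = -((A+D)*(D-A))) by ring; lra).
    destruct (memSQ R D (-B) (-C) A) as [g [p [G4 [G5 G6]]]]; try lra.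
    split; [unfold mdet; simpl; lra|]. split; [unfold hyperbolic, mtr; simpl; rewrite Rplus_comm; auto|].
      exists g, p. split; [exact G4|split; [exact G5|]].
      unfold ell'_pos.
      assert (0 < -((D+A)*(A-D))) by nra.
      destruct (Rlt_or_le (R^2) (fst (mobius (mkM2 D (-B) (-C) A) p) ^ 2 + snd (mobius (mkM2 D (-B) (-C) A) p) ^ 2)) as [h|h]; auto.
      assert (0 <= (R^2 - (fst (mobius (mkM2 D (-B) (-C) A) p) ^ 2 + snd (mobius (mkM2 D (-B) (-C) A) p) ^ 2)) * (-((D+A)*(A-D))))
        by (apply Rmult_le_pos; lra). lra.
  - unfold minv, mdet; simpl. replace (D*A - -B * -C) with 1 by lra. f_equal; field.
Qed.

Lemma M2_eta (M : M2) : M = mkM2 (m11 M) (m12 M) (m21 M) (m22 M).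
Proof. destruct M; reflexivity. Qed.

Lemma pos_t0 (F0 s : R) : F0 * s < 0 -> 0 < - F0 / s /\ s <> 0.
Proof.
  intros H. assert (Hs : s <> 0) by (intro h; subst; lra). split; auto.
  replace (-F0/s) with ((-(F0*s)) / (s*s)) by (field; auto).
  apply Rdiv_lt_0_compat; [lra|]. assert (0 < s^2) by (apply pow2_gt_0; auto). nra.
Qed.

Lemma curveA (Rr a b c d e F0 s : R) : 1 < Rr -> (e = 1 \/ e = -1) -> a*d - b*c = 1 ->
  (forall e1, (e1 = 1 \/ e1 = -1) ->
     Rabs (a*Rr + e*b + e1*c + e1*e*d*/Rr) < Rabs (Rr + e1*e*/Rr)) ->
  F0 = b + c*(/Rr)^2 -> s = -e*a*Rr - b + c*(/Rr)^2 + e*d*(/Rr)^3 ->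
  F0 * s < 0 ->
  meets_transversely (fun t => mmul (mkM2 a b c d) (Pm' Rr e t)) (SQ (ell Rr) (ell_pos Rr)).
Proof.
  intros HR He Hdet HQ HF0 Hs Hneg.
  assert (HR0 : Rr <> 0) by lra.
  destruct (pos_t0 F0 s Hneg) as [Ht0 Hs0].
  set (t0 := - F0 / s).
  exists t0, (mkM2 (a + b*e*/Rr) (-a*e*Rr - b) (c + d*e*/Rr) (-c*e*Rr - d)).
  split; [exact Ht0|]. split; [|split].
  - set (M0 := mmul (mkM2 a b c d) (Pm' Rr e t0)).
    assert (Hdet0 : m11 M0 * m22 M0 - m12 M0 * m21 M0 = 1).
    { unfold M0, mmul, Pm'; simpl. transitivity (a*d - b*c); [|exact Hdet]. destruct He; subst e; field; auto. }
    assert (HF : m12 M0 + (/Rr)^2 * m21 M0 = 0).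
    { assert (m12 M0 + (/Rr)^2 * m21 M0 = F0 + s*t0) by (unfold M0, mmul, Pm'; simpl; rewrite HF0, Hs; ring).
      rewrite H. unfold t0. field; auto. }
    assert (HQ0 : forall e1, (e1 = 1 \/ e1 = -1) ->
      m11 M0 * Rr + e*m12 M0 + e1*m21 M0 + e1*e*m22 M0*/Rr = a*Rr + e*b + e1*c + e1*e*d*/Rr).
    { intros e1 _. unfold M0, mmul, Pm'; simpl. destruct He; subst e; field; auto. }
    destruct (alg_in Rr (m11 M0) (m12 M0) (m21 M0) (m22 M0) e) as [K1 K2]; auto.
    + rewrite HQ0 by auto. apply HQ; auto.
    + rewrite HQ0 by (destruct He; [right|left]; subst; ring). apply HQ. destruct He; [right|left]; subst; ring.
    + rewrite (M2_eta M0). unfold ell, ell_pos. apply memSQ_in; auto.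
      apply Rinv_0_lt_compat; lra.
  - unfold has_deriv; simpl. split; [|split; [|split]].
    + apply (deriv_lin _ a). intros; simpl; ring.
    + apply (deriv_lin _ b). intros; simpl; ring.
    + apply (deriv_lin _ c). intros; simpl; ring.
    + apply (deriv_lin _ d). intros; simpl; ring.
  - apply (not_tangent _ ((/Rr)^2)).
    + intros N HN. unfold ell in HN. exact (SQ_F _ _ _ HN).
    + simpl. rewrite Hs in Hs0. intro h; apply Hs0. rewrite <- h. ring.
Qed.

Lemma minv_Pm (Rr e t : R) : Rr <> 0 -> (e = 1 \/ e = -1) ->
  minv (Pm Rr e t) = mkM2 (1+t) (e*/Rr*t) (-(e*Rr*t)) (1-t).
Proof.
  intros HR He. assert (Hd : mdet (Pm Rr e t) = 1) by (unfold mdet, Pm; simpl; destruct He; subst; field; auto).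
  unfold minv. rewrite Hd. unfold Pm; simpl. f_equal; field; auto.
Qed.

Lemma curveB (Rr a b c d e G0 s : R) : 1 < Rr -> (e = 1 \/ e = -1) -> a*d - b*c = 1 ->
  (forall e1, (e1 = 1 \/ e1 = -1) ->
     Rabs (a*Rr + e1*b + e*c + e*e1*d*/Rr) < Rabs (Rr + e*e1*/Rr)) ->
  G0 = b + Rr^2*c -> s = b + e*d*/Rr - e*Rr^3*a - Rr^2*c ->
  G0 * s < 0 ->
  meets_transversely (fun t => mmul (minv (Pm Rr e t)) (mkM2 a b c d)) (SQinv (ell' Rr) (ell'_pos Rr)).
Proof.
  intros HR He Hdet HQ HG0 Hs Hneg.
  assert (HR0 : Rr <> 0) by lra.
  replace (fun t => mmul (minv (Pm Rr e t)) (mkM2 a b c d))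
    with (fun t => mmul (mkM2 (1+t) (e*/Rr*t) (-(e*Rr*t)) (1-t)) (mkM2 a b c d)).
  2:{ apply functional_extensionality. intro t. rewrite minv_Pm; auto. }
  destruct (pos_t0 G0 s Hneg) as [Ht0 Hs0].
  set (t0 := - G0 / s).
  exists t0, (mkM2 (a + e*/Rr*c) (b + e*/Rr*d) (-(e*Rr)*a - c) (-(e*Rr)*b - d)).
  split; [exact Ht0|]. split; [|split].
  - set (M0 := mmul (mkM2 (1+t0) (e*/Rr*t0) (-(e*Rr*t0)) (1-t0)) (mkM2 a b c d)).
    assert (Hdet0 : m11 M0 * m22 M0 - m12 M0 * m21 M0 = 1).
    { unfold M0, mmul; simpl. transitivity (a*d - b*c); [|exact Hdet]. destruct He; subst e; field; auto. }
    assert (HF : m12 M0 + Rr^2 * m21 M0 = 0).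
    { assert (m12 M0 + Rr^2 * m21 M0 = G0 + s*t0) by (unfold M0, mmul; simpl; rewrite HG0, Hs; field; auto).
      rewrite H. unfold t0. field; auto. }
    assert (HQ0 : forall e1, (e1 = 1 \/ e1 = -1) ->
      m11 M0 * Rr + e1*m12 M0 + e*m21 M0 + e*e1*m22 M0*/Rr = a*Rr + e1*b + e*c + e*e1*d*/Rr).
    { intros e1 _. unfold M0, mmul; simpl. destruct He; subst e; field; auto. }
    destruct (alg_out Rr (m11 M0) (m12 M0) (m21 M0) (m22 M0) e) as [K1 K2]; auto.
    + rewrite HQ0 by auto. apply HQ; auto.
    + rewrite HQ0 by (destruct He; [right|left]; subst; ring). apply HQ. destruct He; [right|left]; subst; ring.
    + rewrite (M2_eta M0). apply memSQinv; auto.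
  - unfold has_deriv; simpl. split; [|split; [|split]].
    + apply (deriv_lin _ a). intros; simpl; ring.
    + apply (deriv_lin _ b). intros; simpl; ring.
    + apply (deriv_lin _ c). intros; simpl; ring.
    + apply (deriv_lin _ d). intros; simpl; ring.
  - apply (not_tangent _ (Rr^2)).
    + intros N [N' [HN' ->]]. unfold ell' in HN'. pose proof (SQ_F Rr _ _ HN') as h. destruct HN' as [Hd _].
      unfold minv; simpl. rewrite Hd. unfold Rdiv. rewrite Rinv_1, !Rmult_1_r. nra.
    + simpl. rewrite Hs in Hs0. intro h; apply Hs0. rewrite <- h. ring.
Qed.

Lemma crossing (Rr a b c d : R) : 1 < Rr -> ~ (b = 0 /\ c = 0) ->
  (b + c*(/Rr)^2) * (-1*a*Rr - b + c*(/Rr)^2 + 1*d*(/Rr)^3) < 0 \/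
  (b + c*(/Rr)^2) * (-(-1)*a*Rr - b + c*(/Rr)^2 + (-1)*d*(/Rr)^3) < 0 \/
  (b + Rr^2*c) * (b + 1*d*/Rr - 1*Rr^3*a - Rr^2*c) < 0 \/
  (b + Rr^2*c) * (b + (-1)*d*/Rr - (-1)*Rr^3*a - Rr^2*c) < 0.
Proof.
  intros HR Hbc.
  set (k := /Rr).
  assert (Hk : Rr * k = 1) by (unfold k; field; lra).
  assert (Hk0 : 0 < k) by (unfold k; apply Rinv_0_lt_compat; lra).
  assert (Hk1 : k < 1) by (unfold k; rewrite <- Rinv_1; apply Rinv_lt_contravar; lra).
  destruct (Rlt_or_le ((b + c*k^2) * (-1*a*Rr - b + c*k^2 + 1*d*k^3)) 0) as [h1|h1]; [left; auto|].
  destruct (Rlt_or_le ((b + c*k^2) * (-(-1)*a*Rr - b + c*k^2 + (-1)*d*k^3)) 0) as [h2|h2]; [right; left; auto|].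
  destruct (Rlt_or_le ((b + Rr^2*c) * (b + 1*d*k - 1*Rr^3*a - Rr^2*c)) 0) as [h3|h3]; [right; right; left; auto|].
  destruct (Rlt_or_le ((b + Rr^2*c) * (b + (-1)*d*k - (-1)*Rr^3*a - Rr^2*c)) 0) as [h4|h4]; [right; right; right; auto|].
  exfalso. apply Hbc.
  assert (S1 : 0 <= c^2*k^4 - b^2).
  { assert (E : (b + c * k ^ 2) * (-1 * a * Rr - b + c * k ^ 2 + 1 * d * k ^ 3) +
      (b + c * k ^ 2) * (- (-1) * a * Rr - b + c * k ^ 2 + -1 * d * k ^ 3) = 2*(c^2*k^4 - b^2)) by ring.
    lra. }
  assert (S2 : 0 <= b^2 - Rr^4*c^2).
  { assert (E : (b + Rr ^ 2 * c) * (b + 1 * d * k - 1 * Rr ^ 3 * a - Rr ^ 2 * c) +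
      (b + Rr ^ 2 * c) * (b + -1 * d * k - -1 * Rr ^ 3 * a - Rr ^ 2 * c) = 2*(b^2 - Rr^4*c^2)) by ring.
    lra. }
  assert (Hk2 : k^2 < 1) by nra.
  assert (Hk4 : k^4 < 1) by (replace (k^4) with (k^2*k^2) by ring; nra).
  assert (HR2 : 1 < Rr^2) by nra.
  assert (HR4 : 1 < Rr^4) by (replace (Rr^4) with (Rr^2*Rr^2) by ring; nra).
  assert (c^2 * (Rr^4 - k^4) <= 0) by lra.
  assert (c^2 = 0).
  { assert (0 <= c^2) by nra. destruct (Req_dec (c^2) 0); auto.
    assert (0 < c^2 * (Rr^4 - k^4)) by (apply Rmult_lt_0_compat; lra). lra. }
  assert (c = 0) by nra. subst c. split; nra.
Qed.

Theorem mainTheorem15 (Rr a b c d : R) :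
  1 < Rr ->
  a * d - b * c = 1 ->
  (forall e e' : R, (e = 1 \/ e = -1) -> (e' = 1 \/ e' = -1) ->
     Rabs (a * Rr + e' * b + e * c + e * e' * d * / Rr)
       < Rabs (Rr + e * e' * / Rr)) ->
  ~ (b = 0 /\ c = 0) ->
  let h := mkM2 a b c d in
  meets_transversely (fun t => mmul h (Pm' Rr 1 t)) (SQ (ell Rr) (ell_pos Rr)) \/
  meets_transversely (fun t => mmul h (Pm' Rr (-1) t)) (SQ (ell Rr) (ell_pos Rr)) \/
  meets_transversely (fun t => mmul (minv (Pm Rr 1 t)) h) (SQinv (ell' Rr) (ell'_pos Rr)) \/
  meets_transversely (fun t => mmul (minv (Pm Rr (-1) t)) h) (SQinv (ell' Rr) (ell'_pos Rr)).
Proof.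
  intros HR Hdet HQ Hbc h. unfold h.
  assert (P1 : 1 = 1 \/ 1 = -1) by (left; reflexivity).
  assert (M1 : -1 = 1 \/ -1 = -1) by (right; reflexivity).
  destruct (crossing Rr a b c d HR Hbc) as [H|[H|[H|H]]].
  - left. eapply curveA; eauto; intros e1 he1; apply HQ; auto.
  - right; left. eapply curveA; eauto; intros e1 he1; apply HQ; auto.
  - right; right; left. eapply curveB; eauto.
  - right; right; right. eapply curveB; eauto.
Qed.
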